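(* Let $p\ge1$, $m\in\mathbb{N}$, $a,b>0$, $\beta\in\mathbb{R}^p$, let $\xi$ be a design on $\mathcal{X}$, and define $$L(\xi;\beta)=I-\frac{M_{Po}(\xi;\beta)e_1e_1^T}{e_1^TM_{Po}(\xi;\beta)e_1+\frac{b}{m}},$$ with $I$ the $p\times p$ identity matrix. Then: (i) $M(\xi;\beta)=\frac{a}{b}L(\xi;\beta)M_{Po}(\xi;\beta)=\frac{a}{b}M_{Po}(\xi;\beta)L(\xi;\beta)^T$; (ii) $L(\xi;\beta)$ is regular; (iii) $L(\xi;\beta)=I-\frac{m}{a}M(\xi;\beta)e_1e_1^T$.
   Context: Let $\mathcal{X}\subseteq\mathbb{R}^k$ be a design region and $f=(1,f_1,\ldots,f_{p-1})^T:\mathcal{X}\to\mathbb{R}^p$ a vector of regression functions whose first component is the constant 1. A design $\xi$ is a probability measure on $\mathcal{X}$ with finite support $x_1,\ldots,x_l$ and weights $w_1,\ldots,w_l\ge0$, $\sum_j w_j=1$. The Poisson information matrix is $M_{Po}(\xi;\beta)=\sum_{j=1}^l w_j\exp(f(x_j)^T\beta)f(x_j)f(x_j)^T$, and the Poisson–Gamma information matrix is $M(\xi;\beta)=\frac{a}{b}\Bigl(M_{Po}(\xi;\beta)-\frac{M_{Po}(\xi;\beta)e_1e_1^TM_{Po}(\xi;\beta)}{e_1^TM_{Po}(\xi;\beta)e_1+b/m}\Bigr)$, where $e_1$ is the first standard unit vector of $\mathbb{R}^p$. *)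

(* Defs.v *)
From HB Require Import structures.
From mathcomp Require Import all_boot all_order all_algebra.
From mathcomp Require Import all_classical all_reals all_analysis.
Set Implicit Arguments. Unset Strict Implicit. Unset Printing Implicit Defensive.
Import Order.TTheory GRing.Theory Num.Theory.
Local Open Scope ring_scope.

(* The paper's dimension p >= 1 is written p.+1 throughout. *)
Definition e1 {R : realType} {p : nat} : 'cV[R]_p.+1 := delta_mx 0 0.

(* Poisson information matrix of the design with support x_0..x_{l-1}
   and weights w_0..w_{l-1}. *)
Definition MPo {R : realType} {k p l : nat} (f : 'rV[R]_k -> 'cV[R]_p.+1)
  (x : 'I_l -> 'rV[R]_k) (w : 'I_l -> R) (beta : 'cV[R]_p.+1) : 'M[R]_p.+1 :=
  \sum_(j < l) (w j * expR (((f (x j))^T *m beta) 0 0)) *: (f (x j) *m (f (x j))^T).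

Definition MPG {R : realType} {k p l : nat} (a b : R) (m : nat)
  (f : 'rV[R]_k -> 'cV[R]_p.+1) (x : 'I_l -> 'rV[R]_k) (w : 'I_l -> R)
  (beta : 'cV[R]_p.+1) : 'M[R]_p.+1 :=
  let M := MPo f x w beta in
  (a / b) *: (M - ((e1^T *m M *m e1) 0 0 + b / m%:R)^-1 *: (M *m e1 *m e1^T *m M)).

Definition Lmat {R : realType} {k p l : nat} (b : R) (m : nat)
  (f : 'rV[R]_k -> 'cV[R]_p.+1) (x : 'I_l -> 'rV[R]_k) (w : 'I_l -> R)
  (beta : 'cV[R]_p.+1) : 'M[R]_p.+1 :=
  let M := MPo f x w beta in
  1%:M - ((e1^T *m M *m e1) 0 0 + b / m%:R)^-1 *: (M *m e1 *m e1^T).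

(* Main.v *)
Require Import Defs.
From HB Require Import structures.
From mathcomp Require Import all_boot all_order all_algebra.
From mathcomp Require Import all_classical all_reals all_analysis.
From mathcomp Require Import ring lra.
Import Order.TTheory GRing.Theory Num.Theory.
Local Open Scope ring_scope.

Lemma gen (R : realType) (p : nat) (M : 'M[R]_p.+1) (m : nat) (a b : R)
  (hm : (0 < m)%N) (ha : 0 < a) (hb : 0 < b) (Ms : M^T = M)
  (c0 : 0 <= (e1^T *m M *m e1) 0 0) :
  let c := (e1^T *m M *m e1) 0 0 in
  let s := (c + b / m%:R)^-1 in
  let N := M *m e1 *m e1^T in
  let L := 1%:M - s *: N in
  let G := (a / b) *: (M - s *: (M *m e1 *m e1^T *m M)) in
  [/\ G = (a / b) *: (L *m M), G = (a / b) *: (M *m L^T), L \in unitmx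
    & L = 1%:M - (m%:R / a) *: (G *m e1 *m e1^T)].
Proof.
move=> c s N L G.
have hc : e1^T *m M *m e1 = c%:M by apply: mx11_scalar.
have NN : N *m N = c *: N.
  have -> : N *m N = M *m e1 *m (e1^T *m M *m e1) *m e1^T by rewrite /N !mulmxA.
  by rewrite hc mul_mx_scalar -scalemxAl.
have mR : (0 < m%:R :> R) by rewrite ltr0n.
have dpos : 0 < c + b / m%:R by rewrite ltr_wpDl // divr_gt0.
have LM : L *m M = M - s *: (M *m e1 *m e1^T *m M).
  by rewrite /L mulmxBl mul1mx -scalemxAl.
have i1 : G = (a / b) *: (L *m M) by rewrite LM.
  have hsc' : 1 - s * c = (b / m%:R) * s.
    by rewrite /s; field; rewrite gt_eqF //= gt_eqF // ltr_wpDl // mulr_ge0 // ltW.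
split => //.
- have -> : L^T = 1%:M - s *: (e1 *m e1^T *m M).
    by rewrite /L /N linearB /= trmx1 linearZ /= !trmx_mul trmxK Ms mulmxA.
  by rewrite /G mulmxBr mulmx1 -scalemxAr !mulmxA.
- set t := s / (1 - s * c).
  have hsc : 1 - s * c != 0.
    by rewrite hsc' mulf_neq0 ?invr_eq0 ?gt_eqF ?divr_gt0.
  have [] := @mulmx1_unit _ _ L (1%:M + t *: N) => //.
  rewrite /L mulmxDr mulmx1 mulmxBl mul1mx -scalemxAl -scalemxAr NN scalerA.
  rewrite scalerA -addrA -[RHS]addr0; congr (_ + _).
  rewrite -scaleNr -scalerBl -scalerDl.
  have -> : - s + (t - s * t * c) = 0 by rewrite /t; field.
  by rewrite scale0r.
- rewrite i1 -!scalemxAl LM mulmxBl -!scalemxAl.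
  have -> : M *m e1 *m e1^T *m M *m e1 = c *: (M *m e1).
    by rewrite -!mulmxA (mulmxA e1^T) hc mul_mx_scalar scalemxAr.
  rewrite !scalerA -{1}(scale1r (M *m e1)) -scalerBl hsc' -scalemxAl !scalerA.
  rewrite /L /N; congr (_ - _ *: _).
  by field; rewrite !gt_eqF.
Qed.

Theorem lemma3 (R : realType) (k p : nat) (X : {pred 'rV[R]_k})
  (f : 'rV[R]_k -> 'cV[R]_p.+1)
  (hf1 : forall z, z \in X -> f z 0 0 = 1)
  (m : nat) (hm : (0 < m)%N) (a b : R) (ha : 0 < a) (hb : 0 < b)
  (beta : 'cV[R]_p.+1)
  (l : nat) (x : 'I_l -> 'rV[R]_k) (w : 'I_l -> R)
  (hxX : forall j, x j \in X) (hw0 : forall j, 0 <= w j)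
  (hw1 : \sum_(j < l) w j = 1) :
  [/\ MPG a b m f x w beta = (a / b) *: (Lmat b m f x w beta *m MPo f x w beta),
      MPG a b m f x w beta = (a / b) *: (MPo f x w beta *m (Lmat b m f x w beta)^T),
      Lmat b m f x w beta \in unitmx
    & Lmat b m f x w beta = 1%:M - (m%:R / a) *: (MPG a b m f x w beta *m e1 *m e1^T)].
Proof.
have Ms : (MPo f x w beta)^T = MPo f x w beta.
  rewrite /MPo linear_sum; apply: eq_bigr => j _.
  by rewrite linearZ /= trmx_mul trmxK.
have sq : forall n (A : 'rV[R]_n), 0 <= (A *m A^T) 0 0.
  move=> n A; rewrite mxE; apply: sumr_ge0 => i _.
  by rewrite mxE -expr2 sqr_ge0.
have c0 : 0 <= (e1^T *m MPo f x w beta *m e1) 0 0.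
  rewrite /MPo mulmx_sumr mulmx_suml summxE; apply: sumr_ge0 => j _.
  rewrite -scalemxAr -scalemxAl mxE; apply: mulr_ge0.
    by rewrite mulr_ge0 ?expR_ge0.
  rewrite !mulmxA -(mulmxA _ _ e1).
  have -> : (f (x j))^T *m e1 = (e1^T *m f (x j))^T by rewrite trmx_mul trmxK.
  exact: sq.
rewrite /MPG /Lmat /=.
exact: gen.
Qed.
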